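(* Let $k\le l$ be positive integers with $\gcd(k,l)=1$, let $n\ge1$, $m\ge 0$ be integers, write $m=qn+r$ with integers $q\ge 0$, $0\le r<n$, and let $A\in\mathcal D^{k,l}(m,n)$. Let $W$ be a submatrix of $A$ (on a set of rows $I$ and set of columns $J$) all of whose entries are at most $q$, with $|I|+|J|$ as large as possible among all such submatrices. After permuting rows and columns write $$A=\begin{pmatrix}X&Y\\ Z&W\end{pmatrix},$$ where $X$ has size $t_1\times t_2$ (so $t_1=nk-|I|$, $t_2=nl-|J|$), $Y$ has size $t_1\times |J|$ and $Z$ has size $|I|\times t_2$. If $t_1+t_2\le nk$, then $${\rm tdet}(A)\ge \min\bigl(nk(q+1),\ {\rm tdet}(Y)+{\rm tdet}(Z)+(nk-t_1-t_2)q\bigr).$$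
   Context: $\mathcal D^{k,l}(m,n)$ denotes the set of all $nk\times nl$ matrices with nonnegative integer entries all of whose row sums equal $ml$ and all of whose column sums equal $mk$. For an $s\times t$ matrix $A=(a_{ij})$ with $s\le t$, a transversal of $A$ is a set of entries $T=\{a_{1i_1},\dots,a_{si_s}\}$ with $i_1,\dots,i_s\in\{1,\dots,t\}$ pairwise distinct, and $|T|=a_{1i_1}+\cdots+a_{si_s}$; if $s>t$, the transversals of $A$ are those of its transpose. The tropical determinant is ${\rm tdet}(A)=\max_T|T|$ over all transversals $T$ of $A$; a matrix with no rows or no columns has tropical determinant $0$. The tropical determinant is invariant under row and column permutations. *)

(* Defs.v *)
From mathcomp Require Import all_boot all_order all_algebra.
Unset Printing Implicit Defensive.

Definition inD (k l m n : nat) (A : 'M[nat]_(n * k, n * l)) : Prop :=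
  (forall i, \sum_j A i j = m * l) /\ (forall j, \sum_i A i j = m * k).

Definition tdet {s t : nat} (A : 'M[nat]_(s, t)) : nat :=
  if s <= t then
    \max_(f : {ffun 'I_s -> 'I_t} | injectiveb f) \sum_(i < s) A i (f i)
  else
    \max_(f : {ffun 'I_t -> 'I_s} | injectiveb f) \sum_(j < t) A (f j) j.

Definition tsubmx {s t : nat} (A : 'M[nat]_(s, t)) (R : {set 'I_s}) (C : {set 'I_t})
  : 'M[nat]_(#|R|, #|C|) :=
  \matrix_(i < #|R|, j < #|C|) A (enum_val i) (enum_val j).

Definition bounded_sub {s t : nat} (A : 'M[nat]_(s, t)) (R : {set 'I_s}) (C : {set 'I_t})
  (q : nat) : Prop :=
  forall i j, i \in R -> j \in C -> A i j <= q.

(* Main.v *)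
Require Import Defs.
From mathcomp Require Import all_boot all_order all_algebra.
From mathcomp Require Import zify.
Import Order.TTheory GRing.Theory Num.Theory.

Definition Nb {R C : finType} (adj : R -> C -> bool) (Y : {set C}) (S : {set R}) : {set C} :=
  [set y in Y | [exists x in S, adj x y]].
Lemma hall_gen (R C : finType) (adj : R -> C -> bool) (y0 : C) (n : nat) :
  forall (X : {set R}) (Y : {set C}), #|X| <= n ->
  (forall S : {set R}, S \subset X -> #|S| <= #|Nb adj Y S|) ->
  exists f : R -> C, (forall x, x \in X -> (f x \in Y) && adj x (f x)) /\ {in X &, injective f}.
Proof.
elim: n => [|n IH] X Y hX hH.
  exists (fun _ => y0); split => x; rewrite (_ : X = set0) ?inE //;
  by apply/eqP; rewrite -cards_eq0; lia.
have [Xe|Xne] := eqVneq X set0.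
  by exists (fun _ => y0); split => x; rewrite Xe inE.
case: (boolP [exists S : {set R}, [&& S \subset X, S != set0, S != X & #|Nb adj Y S| <= #|S|]]).
- case/existsP => S /and4P[sSX Sne SnX hS].
  have pSX : S \proper X by rewrite properEneq SnX.
  have cS : #|S| <= n by have := proper_card pSX; lia.
  have [f1 [f1P f1I]] := IH S Y cS (fun T sT => hH T (subset_trans sT sSX)).
  set Y2 := Y :\: Nb adj Y S.
  have cXS : #|X :\: S| <= n.
    have := cardsID S X; rewrite (setIidPr sSX).
    have : 0 < #|S| by rewrite card_gt0.
    lia.
  have H2 : forall T : {set R}, T \subset X :\: S -> #|T| <= #|Nb adj Y2 T|.
    move=> T sT.
    have sTS : T :|: S \subset X by rewrite subUset sSX (subset_trans sT) // subsetDl.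
    have h1 := hH _ sTS.
    have dTS : [disjoint T & S].
      apply/pred0P => x /=; apply/negP => /andP[xT xS].
      by move/subsetP: sT => /(_ x xT); rewrite inE xS.
    have cU : #|T :|: S| = #|T| + #|S|.
      by rewrite cardsU (_ : T :&: S = set0) ?cards0 ?subn0 //; apply/setP => x; rewrite !inE; move/pred0P: dTS => /(_ x) /= ->.
    have sub : Nb adj Y (T :|: S) \subset Nb adj Y2 T :|: Nb adj Y S.
      apply/subsetP => y; rewrite !inE => /andP[yY /existsP[x /andP[]]].
      rewrite yY /= inE => /orP[xT|xS] axy.
        case yN: [exists x0 in S, adj x0 y] => //=; rewrite ?andbT.
        by rewrite orbF; apply/existsP; exists x; rewrite xT.
      by apply/orP; right; apply/existsP; exists x; rewrite xS.
    have := subset_leq_card sub; have := leq_of_leqif (leq_card_setU (Nb adj Y2 T) (Nb adj Y S)).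
    lia.
  have [f2 [f2P f2I]] := IH _ Y2 cXS H2.
  exists (fun x => if x \in S then f1 x else f2 x); split.
    move=> x xX; case: ifP => xS; first exact: f1P.
    have := f2P x; rewrite inE xS xX => /(_ isT) /andP[]; rewrite inE => /andP[_ ->] ->.
    by [].
  move=> x1 x2 x1X x2X /=.
  have mem1 : forall x, x \in S -> f1 x \in Nb adj Y S.
    move=> x xS; have /andP[fY fa] := f1P x xS; rewrite inE fY /=.
    by apply/existsP; exists x; rewrite xS.
  have mem2 : forall x, x \in X -> x \notin S -> f2 x \notin Nb adj Y S.
    move=> x xX xS; have := f2P x; rewrite inE xS xX => /(_ isT) /andP[].
    by rewrite inE => /andP[].
  case: ifP => x1S; case: ifP => x2S.
  + exact: f1I.
  + by move=> e; have := mem2 x2 x2X (negbT x2S); rewrite -e mem1.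
  + by move=> e; have := mem2 x1 x1X (negbT x1S); rewrite e mem1.
  + by apply: f2I; rewrite inE ?x1S ?x2S ?x1X ?x2X.
- move=> /existsPn noc.
  have [x0 x0X] : exists x0, x0 \in X by apply/set0Pn.
  have : 0 < #|Nb adj Y [set x0]|.
    by have := hH [set x0]; rewrite sub1set x0X cards1 => /(_ isT).
  rewrite card_gt0 => /set0Pn[y0' ]; rewrite inE => /andP[y0Y /existsP[x /andP[]]].
  rewrite inE => /eqP -> ax0; clear x.
  have cX : #|X :\ x0| <= n by have := cardsD1 x0 X; rewrite x0X; lia.
  have H2 : forall T : {set R}, T \subset X :\ x0 -> #|T| <= #|Nb adj (Y :\ y0') T|.
    move=> T sT.
    have [->|Tne] := eqVneq T set0; first by rewrite cards0.
    have sTX : T \subset X by apply: subset_trans sT (subsetDl _ _).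
    have TnX : T != X.
      by apply/eqP => e; move/subsetP: sT => /(_ x0); rewrite e x0X !inE eqxx => /(_ isT).
    have := noc T; rewrite sTX Tne TnX /= -ltnNge => h.
    have sub : Nb adj Y T \subset y0' |: Nb adj (Y :\ y0') T.
      apply/subsetP => y; rewrite !inE => /andP[yY ->]; rewrite yY andbT.
      by case: eqP.
    have := subset_leq_card sub; rewrite cardsU1. lia.
  have [f2 [f2P f2I]] := IH _ _ cX H2.
  exists (fun x => if x == x0 then y0' else f2 x); split.
    move=> x xX; case: eqP => [->|xn]; first by rewrite y0Y.
    have := f2P x; rewrite !inE xX andbT => /(_ (introN eqP xn)) /andP[].
    by case/andP => _ -> ->.
  move=> x1 x2 x1X x2X /=.
  have ne : forall x, x \in X -> x != x0 -> f2 x != y0'.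
    move=> x xX xn; have := f2P x; rewrite !inE xn xX => /(_ isT) /andP[].
    by case/andP.
  case: eqP => e1; case: eqP => e2.
  + by rewrite e1 e2.
  + by move=> e; have := ne x2 x2X (introN eqP e2); rewrite -e eqxx.
  + by move=> e; have := ne x1 x1X (introN eqP e1); rewrite e eqxx.
  + by apply: f2I; rewrite !inE ?x1X ?x2X andbT; apply/eqP.
Qed.

Lemma hall_full (R C : finType) (adj : R -> C -> bool) (y0 : C) :
  (forall S : {set R}, #|S| <= #|Nb adj setT S|) ->
  exists f : R -> C, injective f /\ forall x, adj x (f x).
Proof.
move=> h; have [f [fP fI]] := @hall_gen R C adj y0 _ _ _ (leqnn #|[set: R]|) (fun S _ => h S).
exists f; split; first by move=> x1 x2; apply: fI; rewrite inE.
by move=> x; have /andP[] := fP x (in_setT x).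
Qed.

Lemma sum_bij (R C : finType) (T : Type) (idx : T) (op : Monoid.com_law idx)
  (f : R -> C) (F : C -> T) :
  injective f -> #|C| <= #|R| -> \big[op/idx]_x F (f x) = \big[op/idx]_y F y.
Proof.
move=> fI hc.
have e : f @: setT = setT.
  apply/setP => y; rewrite inE; have /codomP[x ->] := inj_card_onto fI hc y.
  by apply/imsetP; exists x; rewrite ?inE.
have := @big_imset T idx op R C f setT F (in2W fI); rewrite e => ex.
rewrite (eq_bigl (fun x => x \in [set: R])); last by move=> x; rewrite inE.
rewrite -ex; apply: eq_bigl => x; rewrite inE.
by [].
Qed.

Lemma sum_sub_le (I : finType) (P : pred I) (G : I -> nat) :
  \sum_(i | P i) G i <= \sum_i G i.
Proof.
rewrite [X in _ <= X](bigID P) /=; exact: leq_addr.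
Qed.

Lemma sum_setT (I : finType) (F : I -> nat) : \sum_(i in [set: I]) F i = \sum_i F i.
Proof. by apply: eq_bigl => i; rewrite inE. Qed.

Lemma sum_inj_le (I J : finType) (f : I -> J) (G : J -> nat) :
  injective f -> \sum_i G (f i) <= \sum_j G j.
Proof.
move=> fI.
have := @big_imset nat 0 addn I J f setT G (in2W fI).
rewrite sum_setT => <-.
exact: sum_sub_le.
Qed.

Lemma sum_inj_le_q (I J : finType) (f : I -> J) (G : J -> nat) q :
  injective f -> (forall j, q <= G j) -> \sum_i G (f i) + q * (#|J| - #|I|) <= \sum_j G j.
Proof.
move=> fI hq.
have := @big_imset nat 0 addn I J f setT G (in2W fI).
rewrite sum_setT => <-.
rewrite [X in _ <= X](bigID (fun j => j \in f @: setT)) /= leq_add2l.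
have cc : #|~: (f @: [set: I])| = #|J| - #|I|.
  have := cardsC (f @: [set: I]); rewrite card_imset // cardsT; lia.
rewrite -cc mulnC -sum_nat_const (eq_bigl (fun j => j \notin f @: [set: I])); last by move=> j; rewrite inE.
apply: leq_sum => j _.
exact: hq.
Qed.

Lemma bigmax_add (I : finType) (P : pred I) (F : I -> nat) c m :
  (forall i, P i -> F i + c <= m) -> c <= m -> \max_(i | P i) F i + c <= m.
Proof.
move=> h hc.
have : \max_(i | P i) F i <= m - c by apply/bigmax_leqP => i Pi; have := h i Pi; lia.
lia.
Qed.

Lemma sub_bound (N M : nat) (A : 'M[nat]_(N, M)) (u : 'I_N -> nat) (v : 'I_M -> nat) (q : nat)
  (R0 : {set 'I_N}) (C0 : {set 'I_M}) :
  (forall i j, A i j <= u i + v j) -> (forall i, q <= u i) ->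
  tdet (tsubmx A R0 C0) + q * (#|R0| - #|C0|) <= \sum_(i in R0) u i + \sum_(j in C0) v j.
Proof.
move=> cov hq.
have eR : \sum_(i in R0) u i = \sum_(a < #|R0|) u (enum_val a) by rewrite big_enum_val.
have eC : \sum_(j in C0) v j = \sum_(b < #|C0|) v (enum_val b) by rewrite big_enum_val.
have qR : q * (#|R0| - #|C0|) <= \sum_(i in R0) u i.
  apply: leq_trans (_ : q * #|R0| <= _); first by rewrite leq_mul2l leq_subr orbT.
  by rewrite mulnC -sum_nat_const; apply: leq_sum => i _; exact: hq.
rewrite /tdet; case: (leqP #|R0| #|C0|) => h.
- apply: bigmax_add; last by apply: leq_trans qR (leq_addr _ _).
  move=> f /injectiveP fI.
  rewrite (_ : #|R0| - #|C0| = 0) ?muln0 ?addn0; last by apply/eqP; rewrite subn_eq0.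
  apply: leq_trans (_ : \sum_a (u (enum_val a) + v (enum_val (f a))) <= _).
    by apply: leq_sum => a _; rewrite mxE; exact: cov.
  rewrite big_split /= eR eC leq_add2l.
  apply: (@sum_inj_le _ _ f (fun b => v (enum_val b))) => //.
- apply: bigmax_add; last by apply: leq_trans qR (leq_addr _ _).
  move=> g /injectiveP gI.
  apply: leq_trans (_ : \sum_b (u (enum_val (g b)) + v (enum_val b)) + q * (#|R0| - #|C0|) <= _).
    by rewrite leq_add2r; apply: leq_sum => b _; rewrite mxE; exact: cov.
  rewrite big_split /= eR eC -addnA [X in _ + X]addnC addnA leq_add2r.
  have := @sum_inj_le_q _ _ g (fun a => u (enum_val a)) q gI (fun a => hq _).
  by rewrite !card_ord.
Qed.

Section IntPart.
Local Open Scope ring_scope.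
Lemma sumz (I : finType) (P : pred I) (F : I -> nat) :
  (\sum_(i | P i) F i)%N%:Z = \sum_(i | P i) (F i)%:Z.
Proof. exact: (big_morph Posz PoszD (erefl _)). Qed.

Lemma sum_ind (I : finType) (S : {set I}) : \sum_(i : I) ((i \in S) : nat)%:Z = #|S|%:Z.
Proof.
rewrite -sumz; congr Posz; rewrite -sum1_card [in RHS]big_mkcond /=.
by apply: eq_bigr => i _; case: (i \in S).
Qed.

Lemma dual_improve (R C : finType) (c0 : C) (B : R -> C -> nat) (u : R -> int) (v : C -> int) :
  #|R| = #|C| ->
  (forall i j, (B i j)%:Z <= u i + v j) ->
  (exists f : R -> C, injective f /\ \sum_i u i + \sum_j v j <= \sum_i (B i (f i))%:Z)
  \/ (exists (u' : R -> int) (v' : C -> int), (forall i j, (B i j)%:Z <= u' i + v' j) /\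
        \sum_i u' i + \sum_j v' j <= \sum_i u i + \sum_j v j - 1).
Proof.
move=> hRC cov.
pose T i j := u i + v j == (B i j)%:Z.
case: (boolP [forall S : {set R}, (#|S| <= #|Nb T setT S|)%N]).
- move/forallP => hH; left.
  have [f [fI fT]] := @hall_full R C T c0 hH.
  exists f; split => //.
  rewrite -(@sum_bij R C _ _ _ f v fI); last by rewrite hRC.
  rewrite -big_split /=; apply: ler_sum => i _.
  by have := fT i; rewrite /T => /eqP ->.
- move/forallPn => [S]; rewrite -ltnNge => hS; right.
  pose NS := Nb T setT S.
  exists (fun i => u i - ((i \in S) : nat)%:Z), (fun j => v j + ((j \in NS) : nat)%:Z); split.
    move=> i j; have := cov i j.
    case iS: (i \in S); case jN: (j \in NS) => /=; try lia.
    have nT : ~~ T i j.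
      apply/negP => t.
      have : j \in NS by rewrite inE in_setT /=; apply/existsP; exists i; rewrite iS t.
      by rewrite jN.
    move: nT; rewrite /T; lia.
  rewrite sumrB big_split /= !sum_ind /NS. set a := \sum_i u i. set b := \sum_i v i. clearbody T. move: hS. set x := #|Nb T _ S|. set y := #|S|. lia.
Qed.

Lemma sq_dual_int (R C : finType) (c0 : C) (B : R -> C -> nat) : #|R| = #|C| ->
  exists (u : R -> int) (v : C -> int) (f : R -> C), injective f /\
    (forall i j, (B i j)%:Z <= u i + v j) /\
    \sum_i u i + \sum_j v j <= \sum_i (B i (f i))%:Z.
Proof.
move=> hRC.
have [s0 [s0I _]] : exists f : R -> C, injective f /\ forall x, (fun _ _ => true) x (f x).
  apply: (@hall_full R C (fun _ _ => true) c0) => S.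
  have [->|Sne] := eqVneq S set0; first by rewrite cards0.
  have [x xS] := set0Pn _ Sne.
  rewrite (_ : Nb _ _ _ = setT); first by rewrite cardsT -hRC max_card.
  by apply/setP => y; rewrite !inE; apply/existsP; exists x; rewrite xS.
have lb : forall u v, (forall i j, (B i j)%:Z <= u i + v j) ->
    0 <= \sum_i u i + \sum_j v j.
  move=> u v cov.
  rewrite -(@sum_bij R C _ _ _ s0 v s0I); last by rewrite hRC.
  rewrite -big_split /=; apply: sumr_ge0 => i _.
  by apply: le_trans (cov i (s0 i)).
have main : forall n u v, (forall i j, (B i j)%:Z <= u i + v j) ->
    \sum_i u i + \sum_j v j <= n%:Z ->
    exists (u : R -> int) (v : C -> int) (f : R -> C), injective f /\
    (forall i j, (B i j)%:Z <= u i + v j) /\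
    \sum_i u i + \sum_j v j <= \sum_i (B i (f i))%:Z.
  elim=> [|n IH] u v cov hc; (case: (@dual_improve R C c0 B u v hRC cov) => [[f [fI hf]]|[u' [v' [cov' hc']]]];
    [by exists u, v, f | ]).
    by have := lb _ _ cov'; lia.
  by apply: (IH u' v' cov'); lia.
pose u0 i := (\sum_j B i j)%N%:Z.
have cov0 : forall i j, (B i j)%:Z <= u0 i + (fun _ => 0) j.
  move=> i j; rewrite addr0 lez_nat /u0.
  by rewrite (bigD1 j) //= leq_addr.
have := lb _ _ cov0.
set c := (\sum_i u0 i + \sum_j _) => hc.
apply: (main (absz c) u0 _ cov0); rewrite -/c; clearbody c; lia.
Qed.

Lemma sq_dual (R C : finType) (c0 : C) (B : R -> C -> nat) : #|R| = #|C| ->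
  exists (u : R -> nat) (v : C -> nat) (f : R -> C), injective f /\
    (forall i j, B i j <= u i + v j)%N /\ (exists j0, v j0 = 0%N) /\
    (\sum_i u i + \sum_j v j <= \sum_i B i (f i))%N.
Proof.
move=> hRC.
have [u [v [f [fI [cov hc]]]]] := @sq_dual_int R C c0 B hRC.
have [r0 _] : exists r0 : R, r0 \in R.
  by apply/card_gt0P; rewrite hRC; apply/card_gt0P; exists c0.
case: (@arg_minnP C c0 (fun _ => true) (fun j => absz (v j + u r0)) isT) => j0 _ hmin.
have vlb : forall j, v j0 <= v j.
  move=> j; have := hmin j isT; have := cov r0 j; have := cov r0 j0; lia.
exists (fun i => absz (u i + v j0)), (fun j => absz (v j - v j0)), f; split => //; split.
  move=> i j; have := cov i j; have := cov i j0; have := vlb j; rewrite -lez_nat; lia.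
split; first by exists j0; rewrite subrr.
rewrite -lez_nat PoszD !sumz.
have e1 : \sum_i ((absz (u i + v j0))%:Z) = \sum_i (u i + v j0).
  by apply: eq_bigr => i _; have := cov i j0; lia.
have e2 : \sum_j ((absz (v j - v j0))%:Z) = \sum_j (v j - v j0).
  by apply: eq_bigr => j _; have := vlb j; lia.
rewrite e1 e2 big_split sumrB /= !sumr_const -hRC.
move: hc; set a := \sum_i u i; set b := \sum_j v j; set s := \sum_i _.
move=> hc; rewrite -[X in _ <= X]/s.
rewrite !cardT. set w := v j0 *+ _.
lia.
Qed.
End IntPart.

Lemma sum_lb_rows (N M : nat) (A : 'M[nat]_(N, M)) (u : 'I_N -> nat) (v : 'I_M -> nat) j0 :
  (forall i j, A i j <= u i + v j) -> v j0 = 0 -> \sum_i A i j0 <= \sum_i u i.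
Proof. by move=> cov h; apply: leq_sum => i _; have := cov i j0; rewrite h addn0. Qed.

Theorem lemma2p5 (k l n m : nat) (A : 'M[nat]_(n * k, n * l))
  (I : {set 'I_(n * k)}) (J : {set 'I_(n * l)}) :
  0 < k -> k <= l -> coprime k l -> 0 < n ->
  inD k l m n A ->
  bounded_sub A I J (m %/ n) ->
  (forall (I' : {set 'I_(n * k)}) (J' : {set 'I_(n * l)}),
      bounded_sub A I' J' (m %/ n) -> #|I'| + #|J'| <= #|I| + #|J|) ->
  (n * k - #|I|) + (n * l - #|J|) <= n * k ->
  minn (n * k * (m %/ n).+1)
       (tdet (tsubmx A (~: I) J) + tdet (tsubmx A I (~: J))
        + (n * k - (n * k - #|I|) - (n * l - #|J|)) * (m %/ n))
  <= tdet A.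
Proof.
move=> k0 kl _ n0 [hrow hcol] _ _ _.
set N := n * k in A I hrow hcol *; set M := n * l in A J hrow hcol *.
set q := m %/ n.
have NM : N <= M by rewrite /N /M leq_mul2l kl orbT.
have M0 : 0 < M by rewrite /M muln_gt0 n0 (leq_trans k0 kl).
pose c0 : 'I_M := Ordinal M0.
pose B (x : 'I_N + 'I_(M - N)) (j : 'I_M) : nat := if x is inl i then A i j else 0.
have hRC : #|{: 'I_N + 'I_(M - N)}| = #|'I_M| by rewrite card_sum !card_ord subnKC.
have [u [v [f [fI [cov [[j0 vj0] hc]]]]]] := @sq_dual _ _ c0 B hRC.
pose uA i := u (inl i).
have covA : forall i j, A i j <= uA i + v j by move=> i j; exact: (cov (inl i) j).
pose g : {ffun 'I_N -> 'I_M} := [ffun i => f (inl i)].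
have gI : injectiveb g.
  by apply/injectiveP => i1 i2; rewrite !ffunE => /fI [].
have D_le : \sum_i uA i + \sum_j v j <= tdet A.
  rewrite /tdet NM.
  apply: leq_trans (leq_bigmax_cond _ gI).
  move: hc; rewrite !big_sumType /= big1_eq addn0 => hc.
  apply: leq_trans (leq_trans _ hc) _; first by rewrite leq_add2r leq_addr.
  by rewrite leq_eqVlt; apply/orP; left; apply/eqP; apply: eq_bigr => i _; rewrite ffunE.
have qn : q * n <= m by apply: leq_divM.
have h1 : q * N <= \sum_i uA i.
  apply: (leq_trans _ (@sum_lb_rows _ _ A uA v j0 covA vj0)); rewrite hcol /N mulnA.
  by rewrite leq_mul2r qn orbT.
case: (boolP [exists i, uA i < q]).
- case/existsP => i0 hi0.
  have h2 : q * M <= M * uA i0 + \sum_j v j.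
    rewrite (_ : M * uA i0 = \sum_(j < M) uA i0); last by rewrite sum_nat_const card_ord.
    rewrite -big_split /=.
    apply: leq_trans (_ : \sum_j A i0 j <= _); last by apply: leq_sum => j _; exact: covA.
    by rewrite hrow /M mulnA leq_mul2r qn orbT.
  have h3 : M * (uA i0).+1 <= M * q by rewrite leq_mul2l hi0 orbT.
  have h4 : N * q.+1 <= \sum_i uA i + \sum_j v j.
    rewrite mulnS; rewrite mulnS in h3; rewrite [q * N]mulnC in h1; rewrite [q * M]mulnC in h2.
    move: h1 h2 h3 NM; set x := N * q; set y := M * q; set z := M * uA i0; lia.
  by apply: leq_trans (geq_minl _ _) (leq_trans h4 D_le).
- move/existsPn => hq; have {}hq : forall i, q <= uA i by move=> i; have := hq i; rewrite ltnNge negbK.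
  have hY := @sub_bound _ _ A uA v q (~: I) J covA hq.
  have hZ := @sub_bound _ _ A uA v q I (~: J) covA hq.
  apply: leq_trans (geq_minr _ _) (leq_trans _ D_le).
  have cI := cardsC I; have cJ := cardsC J; rewrite !card_ord in cI cJ.
  have -> : N - (N - #|I|) - (M - #|J|) = #|I| - #|~: J| by lia.
  rewrite [\sum_i uA i](bigID (fun i => i \in I)) [\sum_j v j](bigID (fun j => j \in J)) /=.
  have e1 : \sum_(i in ~: I) uA i = \sum_(i | i \notin I) uA i by apply: eq_bigl => i; rewrite inE.
  have e2 : \sum_(j in ~: J) v j = \sum_(j | j \notin J) v j by apply: eq_bigl => j; rewrite inE.
  move: hY hZ; rewrite e1 e2 [q * (#|I| - _)]mulnC.
  set a := (#|I| - _) * q; set b := q * (#|~: I| - _).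
  set s1 := \sum_(i in I) uA i; set s2 := \sum_(i | i \notin I) uA i.
  set s3 := \sum_(i in J) v i; set s4 := \sum_(i | i \notin J) v i.
  set tY := tdet _; set tZ := tdet _.
  clearbody a b s1 s2 s3 s4 tY tZ; lia.
Qed.
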